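(* Let $F,G:\mathbb{F}_{2^n}\to\mathbb{F}_{2^n}$ be extended-affine (EA) equivalent, i.e. CCZ-equivalent via an affine permutation $\mathcal{A}(u)=\begin{pmatrix}\mathcal{A}_{11}&0\\ \mathcal{A}_{21}&\mathcal{A}_{22}\end{pmatrix}u+\begin{pmatrix}C\\ D\end{pmatrix}$ of $\mathbb{F}_{2^n}\times\mathbb{F}_{2^n}$ with $\{(x,G(x)):x\in\mathbb{F}_{2^n}\}=\{\mathcal{A}(x,F(x)):x\in\mathbb{F}_{2^n}\}$. Then for all $a,b,c\in\mathbb{F}_{2^n}$, $$\mathrm{LBCT}_F(a,b,c)=\mathrm{LBCT}_G(\mathcal{A}_{11}a,\ \mathcal{A}_{11}b,\ \mathcal{A}_{22}c+\mathcal{A}_{21}b),$$ and the map $(a,b,c)\mapsto(\mathcal{A}_{11}a,\mathcal{A}_{11}b,\mathcal{A}_{22}c+\mathcal{A}_{21}b)$ is a bijection of $\mathbb{F}_{2^n}^3$; hence the LBCT spectrum is preserved under EA-equivalence.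
   Context: Elements of $\mathbb{F}_{2^n}$ are identified with vectors of $\mathbb{F}_2^n$; $\mathcal{A}_{ij}$ are $\mathbb{F}_2$-linear maps of $\mathbb{F}_{2^n}$, $C,D\in\mathbb{F}_{2^n}$, and $\mathcal{A}$ is bijective. For any function $H:\mathbb{F}_{2^n}\to\mathbb{F}_{2^n}$, $$\mathrm{LBCT}_H(a,b,c)=\left|\left\{X\in\mathbb{F}_{2^n} : \exists\,Y\in\mathbb{F}_{2^n}\text{ with } X+Y=b,\ H(X+a)+H(Y+a)=c,\ H(X)+H(Y)=c\right\}\right|.$$ *)

(* Defs.v *)
From HB Require Import structures.
From mathcomp Require Import all_boot all_order all_algebra.
Set Implicit Arguments. Unset Strict Implicit. Unset Printing Implicit Defensive.
Import GRing.Theory.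
Local Open Scope ring_scope.

(* F_{2^n} is identified (as an F_2-vector space) with F_2^n = 'rV['F_2]_n.
   F_2-linear maps are n x n matrices over 'F_2 acting on row vectors: u *m M. *)
Notation vec n := 'rV['F_2]_n.

Definition LBCT n (H : vec n -> vec n) (a b c : vec n) : nat :=
  #|[set X : vec n | [exists Y : vec n,
       [&& X + Y == b, H (X + a) + H (Y + a) == c & H X + H Y == c]]]|.

Definition EAmap n (A11 A21 A22 : 'M['F_2]_n) (C D : vec n)
    (u : vec n * vec n) : vec n * vec n :=
  (u.1 *m A11 + C, u.1 *m A21 + u.2 *m A22 + D).

Definition graph n (H : vec n -> vec n) : {set vec n * vec n} :=
  [set (x, H x) | x : vec n].

(* Main.v *)
Require Import Defs.
From HB Require Import structures.
From mathcomp Require Import all_boot all_order all_algebra.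
Import GRing.Theory.
Local Open Scope ring_scope.

Lemma addvv n (x : vec n) : x + x = 0.
Proof. apply/matrixP => i j; rewrite !mxE.
case: (x i j) => [[|[|k]] Hk] //; apply: val_inj => //. Qed.

Lemma eq_mulmx_inj n (A : 'M['F_2]_n) (u v : vec n) :
  injective (fun y : vec n => y *m A) -> (u *m A == v *m A) = (u == v).
Proof. by move=> hA; apply/eqP/eqP => [/hA|->]. Qed.

Theorem mainTheorem4 (n : nat) (F G : vec n -> vec n)
    (A11 A21 A22 : 'M['F_2]_n) (C D : vec n) :
  bijective (EAmap A11 A21 A22 C D) ->
  graph G = EAmap A11 A21 A22 C D @: graph F ->
  (forall a b c : vec n,
     LBCT F a b c = LBCT G (a *m A11) (b *m A11) (c *m A22 + b *m A21))
  /\ bijective (fun t : vec n * vec n * vec n =>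
       (t.1.1 *m A11, t.1.2 *m A11, t.2 *m A22 + t.1.2 *m A21)).
Proof.
move=> hbij hgr.
have hinj := bij_inj hbij.
have i22 : injective (fun y : vec n => y *m A22).
  move=> y y' /= e; have := hinj (0, y) (0, y').
  by rewrite /EAmap /= !mul0mx e => /(_ erefl) [].
have [g _ gK] := injF_bij i22.
have i11 : injective (fun y : vec n => y *m A11).
  move=> x x' /= e.
  have := hinj (x, 0) (x', g ((x - x') *m A21)).
  rewrite /EAmap /= e gK mul0mx addr0 mulmxBl.
  have -> : x' *m A21 + (x *m A21 - x' *m A21) = x *m A21.
    by rewrite addrC -addrA addNr addr0.
  by move=> /(_ erefl) [].
set f := fun X : vec n => X *m A11 + C.
have fi : injective f by move=> x y /addIr /i11.
have [h hK Kh] := injF_bij fi.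
have hG : forall Z, G (f Z) = Z *m A21 + F Z *m A22 + D.
  move=> Z.
  have : EAmap A11 A21 A22 C D (Z, F Z) \in graph G.
    by rewrite hgr; apply: imset_f; apply/imsetP; exists Z.
  case/imsetP => y _ [e1 e2]; rewrite /f e1 -e2 /EAmap /=.
  by [].
have hGG : forall Z W, G (f Z) + G (f W) = (Z + W) *m A21 + (F Z + F W) *m A22.
  by move=> Z W; rewrite !hG !mulmxDl addrACA addvv addr0 addrACA.
have ffa : forall X a, f X + a *m A11 = f (X + a).
  by move=> X a; rewrite /f mulmxDl addrAC.
have ffs : forall X Y, f X + f Y = (X + Y) *m A11.
  by move=> X Y; rewrite /f mulmxDl addrACA addvv addr0.
split.
  move=> a b c; rewrite /LBCT.
  have -> : [set X : vec n | [exists Y : vec n,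
       [&& X + Y == b *m A11, G (X + a *m A11) + G (Y + a *m A11)
          == c *m A22 + b *m A21 & G X + G Y == c *m A22 + b *m A21]]]
    = f @: [set X : vec n | [exists Y : vec n,
       [&& X + Y == b, F (X + a) + F (Y + a) == c & F X + F Y == c]]].
    apply/setP => X'; rewrite -[X']Kh (mem_imset _ _ fi) !inE.
    set X := h X'.
    apply/existsP/existsP => [[Y' ]|[Y]].
      rewrite -[Y']Kh; set Y := h Y'; rewrite !ffa !ffs !hGG.
      case/and3P; rewrite (eq_mulmx_inj _ _ _ _ i11) => /eqP e.
      rewrite addrACA addvv addr0 e ![_ + b *m A21]addrC !(inj_eq (addrI _)).
      rewrite !(eq_mulmx_inj _ _ _ _ i22) => e1 e2.
      by exists Y; rewrite e1 e2 e eqxx.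
    case/and3P => /eqP e e1 e2; exists (f Y).
    rewrite !ffa !ffs !hGG addrACA addvv addr0 e eqxx.
    rewrite ![_ + b *m A21]addrC !(inj_eq (addrI _)).
    by rewrite !(eq_mulmx_inj _ _ _ _ i22) e1 e2.
  by rewrite card_imset.
apply: injF_bij => [[[a b] c]] [[a' b'] c'] /= [/i11 -> /i11 ->].
by move/addIr/i22 ->.
Qed.
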